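(* For every formula $\phi$ of the language of $\mathbf{GLP}$, $\mathbf{GLP}\vdash[1]\phi$ if and only if $\mathbf{GLP}\{[0]q\to q\}\vdash\phi$.
   Context: $\mathbf{GLP}$ is the propositional polymodal logic with modalities $[0],[1],[2],\dots$ ($\langle k\rangle:=\neg[k]\neg$) axiomatized by classical tautologies; $[k](\phi\to\psi)\to([k]\phi\to[k]\psi)$; $[k]([k]\phi\to\phi)\to[k]\phi$; $\langle j\rangle\phi\to[k]\langle j\rangle\phi$ for $j<k$; $[j]\phi\to[k]\phi$ for $j\leq k$; rules modus ponens and necessitation. $\mathbf{GLP}\{[0]q\to q\}$ (with $q$ a propositional variable) is the smallest set of formulas containing all theorems of $\mathbf{GLP}$ and the formula $[0]q\to q$ and closed under modus ponens and substitution (replacing variables uniformly by formulas); necessitation is not a rule of this set. *)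

(* Defs.v *)
From Stdlib Require Import Arith.

Inductive form : Type :=
| Var : nat -> form
| Bot : form
| Imp : form -> form -> form
| Box : nat -> form -> form.

Definition Neg (p : form) : form := Imp p Bot.
Definition Dia (k : nat) (p : form) : form := Neg (Box k (Neg p)).

Fixpoint peval (v : form -> bool) (p : form) : bool :=
  match p with
  | Var n => v (Var n)
  | Bot => false
  | Imp a b => implb (peval v a) (peval v b)
  | Box k a => v (Box k a)
  end.

(* Classical tautology = instance of a propositional tautology:
   true under every boolean valuation of its maximal non-propositional
   subformulas (variables and boxed formulas). *)
Definition tautology (p : form) : Prop := forall v : form -> bool, peval v p = true.

Inductive GLP : form -> Prop :=
| glp_taut : forall p, tautology p -> GLP p
| glp_K : forall k p q, GLP (Imp (Box k (Imp p q)) (Imp (Box k p) (Box k q)))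
| glp_Lob : forall k p, GLP (Imp (Box k (Imp (Box k p) p)) (Box k p))
| glp_dia : forall j k p, j < k -> GLP (Imp (Dia j p) (Box k (Dia j p)))
| glp_mono : forall j k p, j <= k -> GLP (Imp (Box j p) (Box k p))
| glp_mp : forall p q, GLP (Imp p q) -> GLP p -> GLP q
| glp_nec : forall k p, GLP p -> GLP (Box k p).

Fixpoint subst (s : nat -> form) (p : form) : form :=
  match p with
  | Var n => s n
  | Bot => Bot
  | Imp a b => Imp (subst s a) (subst s b)
  | Box k a => Box k (subst s a)
  end.

(* GLP{[0]q -> q} with q the propositional variable Var 0: the smallest set
   containing GLP theorems and [0]q -> q, closed under MP and substitution
   (no necessitation). *)
Inductive GLP_refl0 : form -> Prop :=
| r_glp : forall p, GLP p -> GLP_refl0 p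
| r_ax : GLP_refl0 (Imp (Box 0 (Var 0)) (Var 0))
| r_mp : forall p q, GLP_refl0 (Imp p q) -> GLP_refl0 p -> GLP_refl0 q
| r_subst : forall s p, GLP_refl0 p -> GLP_refl0 (subst s p).

(* Main.v *)
Require Import Defs.
From Stdlib Require Import Arith Lia.

Definition And (a b : form) : form := Imp (Imp a (Imp b Bot)) Bot.
Definition Top : form := Imp Bot Bot.

Ltac taut := let v := fresh "v" in intro v; unfold And, Top, Dia, Neg in *; simpl;
  repeat match goal with
  | |- context [peval v ?x] => destruct (peval v x)
  | |- context [v ?x] => destruct (v x)
  end; reflexivity.

Lemma G1 a b : tautology (Imp a b) -> GLP a -> GLP b.
Proof. intros H Ha. eapply glp_mp; [apply glp_taut, H| exact Ha]. Qed.
Lemma G2 a b c : tautology (Imp a (Imp b c)) -> GLP a -> GLP b -> GLP c.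
Proof. intros H Ha Hb. eapply glp_mp; [eapply glp_mp; [apply glp_taut, H| exact Ha]| exact Hb]. Qed.
Lemma T1 a b : tautology (Imp a b) -> GLP_refl0 a -> GLP_refl0 b.
Proof. intros H Ha. eapply r_mp; [apply r_glp, glp_taut, H| exact Ha]. Qed.
Lemma T2 a b c : tautology (Imp a (Imp b c)) -> GLP_refl0 a -> GLP_refl0 b -> GLP_refl0 c.
Proof. intros H Ha Hb. eapply r_mp; [eapply r_mp; [apply r_glp, glp_taut, H| exact Ha]| exact Hb]. Qed.

Lemma boxmono k a b : GLP (Imp a b) -> GLP (Imp (Box k a) (Box k b)).
Proof. intro H. eapply glp_mp; [apply glp_K| apply glp_nec, H]. Qed.

Lemma peval_subst s v p :
  peval v (subst s p) = peval (fun x => peval v (subst s x)) p.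
Proof. induction p; simpl; auto. rewrite IHp1, IHp2; auto. Qed.

Lemma GLP_subst s p : GLP p -> GLP (subst s p).
Proof.
  induction 1; simpl.
  - apply glp_taut. intro v. rewrite peval_subst. apply H.
  - apply glp_K.
  - apply glp_Lob.
  - exact (glp_dia j k (subst s p) H).
  - apply glp_mono; auto.
  - eapply glp_mp; eauto.
  - apply glp_nec; auto.
Qed.

Lemma refl_box1 q : GLP (Box 1 (Imp (Box 0 q) q)).
Proof.
  assert (A : GLP (Imp (Box 1 q) (Box 1 (Imp (Box 0 q) q)))).
  { apply boxmono. apply glp_taut. taut. }
  assert (B : GLP (Imp (Box 0 q) (Box 1 q))) by (apply glp_mono; lia).
  assert (C : GLP (Imp (Dia 0 (Neg q)) (Box 1 (Dia 0 (Neg q))))) by (apply glp_dia; lia).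
  assert (D : GLP (Imp (Dia 0 (Neg q)) (Box 1 (Imp (Box 0 q) q)))).
  { assert (E : GLP (Imp (Box 0 q) (Box 0 (Neg (Neg q))))).
    { apply boxmono, glp_taut. taut. }
    assert (F : GLP (Imp (Box 1 (Dia 0 (Neg q))) (Box 1 (Imp (Box 0 q) q)))).
    { apply boxmono. eapply G1; [|exact E]. taut. }
    eapply G2; [|exact C|exact F]. taut. }
  assert (E : GLP (Imp (Box 0 (Neg (Neg q))) (Box 0 q))).
  { apply boxmono, glp_taut. taut. }
  assert (X : GLP (Imp (Box 0 q) (Box 1 (Imp (Box 0 q) q)))).
  { eapply G2; [|exact B|exact A]. taut. }
  assert (Y : GLP (Imp (Imp (Box 0 (Neg (Neg q))) Bot) (Box 1 (Imp (Box 0 q) q)))).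
  { exact D. }
  eapply glp_mp; [eapply glp_mp; [eapply glp_mp; [apply glp_taut|exact E]|exact X]|exact Y].
  taut.
Qed.

Lemma dir1 phi : GLP_refl0 phi -> GLP (Box 1 phi).
Proof.
  induction 1.
  - apply glp_nec; auto.
  - apply refl_box1.
  - eapply glp_mp; [eapply glp_mp; [apply glp_K| exact IHGLP_refl0_1]| exact IHGLP_refl0_2].
  - apply (GLP_subst s (Box 1 p)); auto.
Qed.

Definition g (k : nat) (a : form) : form :=
  match k with
  | 0 => Box 0 a
  | 1 => And (Box 1 a) a
  | _ => Top
  end.

Fixpoint tr (p : form) : form :=
  match p with
  | Var n => Var n
  | Bot => Bot
  | Imp a b => Imp (tr a) (tr b)
  | Box k a => g k a
  end.

Lemma peval_tr v p : peval v (tr p) = peval (fun x => peval v (tr x)) p.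
Proof. induction p; simpl; auto. rewrite IHp1, IHp2; auto. Qed.

Lemma key chi : GLP chi -> GLP_refl0 (tr chi).
Proof.
  induction 1.
  - apply r_glp, glp_taut. intro v. rewrite peval_tr. apply H.
  - destruct k as [|[|k]]; simpl.
    + apply r_glp, glp_K.
    + eapply T1; [|apply r_glp, (glp_K 1 p q)]. taut.
    + apply r_glp, glp_taut. taut.
  - destruct k as [|[|k]]; simpl.
    + apply r_glp, glp_Lob.
    + eapply T1; [|apply r_glp, (glp_Lob 1 p)]. taut.
    + apply r_glp, glp_taut. taut.
  - destruct j as [|[|j]]; destruct k as [|[|k]]; try lia; simpl.
    + eapply T1; [|apply r_glp, (glp_dia 0 1 p); lia]. taut.
    + apply r_glp, glp_taut. taut.
    + apply r_glp, glp_taut. taut.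
    + apply r_glp, glp_taut. taut.
  - destruct j as [|[|j]]; destruct k as [|[|k]]; try lia; simpl.
    + apply r_glp, glp_mono; lia.
    + assert (R : GLP_refl0 (Imp (Box 0 p) p)).
      { apply (r_subst (fun _ => p) _ r_ax). }
      eapply T2; [| apply r_glp, (glp_mono 0 1 p); lia | exact R]. taut.
    + apply r_glp, glp_taut. taut.
    + apply r_glp, glp_taut. taut.
    + apply r_glp, glp_taut. taut.
    + apply r_glp, glp_taut. taut.
  - simpl in IHGLP1. eapply r_mp; eauto.
  - destruct k as [|[|k]]; simpl.
    + apply r_glp, glp_nec; auto.
    + eapply T2; [| apply r_glp, (glp_nec 1 p H) | apply r_glp, H]. taut.
    + apply r_glp, glp_taut. taut.
Qed.

Theorem mainTheorem10 : forall phi : form, GLP (Box 1 phi) <-> GLP_refl0 phi.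
Proof.
  intro phi; split.
  - intro H. apply key in H. simpl in H. eapply T1; [|exact H]. taut.
  - apply dir1.
Qed.
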